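(* Let $(X,d)$ be a complete metric space, let $F:(0,\infty)\to\mathbb{R}$ have a finite right limit $\lim_{s\to t^+}F(s)$ at every point $t>0$, and let $\varphi:(0,\infty)\to(0,\infty)$ satisfy: for every $t>0$ and every sequence $(t_n)\subset(t,\infty)$ with $t_n\to t$, $\limsup_{n\to\infty}\varphi(t_n)>0$. Let $T:X\to X$ be contractive and such that for all $x,y\in X$ with $Tx\neq Ty$, $$\varphi(d(x,y))+F(d(Tx,Ty))\le F(d(x,y)).$$ Then $T$ is a CJMP-contraction.
   Context: $T$ is contractive if $d(Tx,Ty)<d(x,y)$ for all $x\neq y$. $T$ is a CJMP-contraction if it is contractive and for every $\varepsilon>0$ there exists $\delta>0$ such that for all $x,y\in X$, $\varepsilon<d(x,y)<\varepsilon+\delta$ implies $d(Tx,Ty)\le\varepsilon$. *)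

(* Defs.v *)
From Stdlib Require Import Reals.
From Coquelicot Require Import Coquelicot.
Open Scope R_scope.

Definition is_metric {X : Type} (d : X -> X -> R) : Prop :=
  (forall x y, 0 <= d x y) /\
  (forall x y, d x y = 0 <-> x = y) /\
  (forall x y, d x y = d y x) /\
  (forall x y z, d x z <= d x y + d y z).

Definition cauchy_seq {X : Type} (d : X -> X -> R) (u : nat -> X) : Prop :=
  forall eps, 0 < eps -> exists N : nat, forall m n, (N <= m)%nat -> (N <= n)%nat ->
    d (u m) (u n) < eps.

Definition converges_to {X : Type} (d : X -> X -> R) (u : nat -> X) (l : X) : Prop :=
  forall eps, 0 < eps -> exists N : nat, forall n, (N <= n)%nat -> d (u n) l < eps.

Definition complete_metric {X : Type} (d : X -> X -> R) : Prop :=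
  forall u : nat -> X, cauchy_seq d u -> exists l, converges_to d u l.

Definition contractive {X : Type} (d : X -> X -> R) (T : X -> X) : Prop :=
  forall x y, x <> y -> d (T x) (T y) < d x y.

Definition CJMP_contraction {X : Type} (d : X -> X -> R) (T : X -> X) : Prop :=
  contractive d T /\
  forall eps, 0 < eps -> exists delta, 0 < delta /\
    forall x y, eps < d x y -> d x y < eps + delta -> d (T x) (T y) <= eps.

(* Main.v *)
Require Import Defs.
From Stdlib Require Import Reals.
From Coquelicot Require Import Coquelicot.
From Stdlib Require Import Classical ClassicalEpsilon Lra.
Open Scope R_scope.

Lemma small_inv (delta : R) : 0 < delta -> exists N : nat, forall n, (N <= n)%nat -> / (INR n + 1) < delta.
Proof.
  intros Hd.
  destruct (nfloor_ex (/ delta)) as [N HN].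
  { left; apply Rinv_0_lt_compat; lra. }
  exists N; intros n Hn.
  apply le_INR in Hn.
  assert (/ delta < INR n + 1) by lra.
  assert (0 < INR n + 1) by (pose proof (pos_INR n); lra).
  replace delta with (/ / delta) by (field; lra).
  apply Rinv_lt_contravar; [|lra].
  apply Rmult_lt_0_compat; [apply Rinv_0_lt_compat|]; lra.
Qed.

(* F and phi are only meaningful on (0,oo); they are modelled as total
   functions R -> R whose values on (-oo,0] are irrelevant. *)
Theorem mainTheorem6 (X : Type) (d : X -> X -> R) (F phi : R -> R) (T : X -> X) :
  is_metric d ->
  complete_metric d ->
  (forall t, 0 < t -> exists L : R, filterlim F (at_right t) (locally L)) ->
  (forall t, 0 < t -> 0 < phi t) ->
  (forall (t : R) (tn : nat -> R), 0 < t -> (forall n, t < tn n) ->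
      is_lim_seq tn t -> Rbar_lt 0 (LimSup_seq (fun n => phi (tn n)))) ->
  contractive d T ->
  (forall x y, T x <> T y -> phi (d x y) + F (d (T x) (T y)) <= F (d x y)) ->
  CJMP_contraction d T.
Proof.
  intros Hm _ HF Hphi Hls Hc HT.
  destruct Hm as [Hd0 [Hdeq [Hsym Htri]]].
  split; [exact Hc|].
  intros eps Heps.
  apply NNPP; intro Hno.
  assert (Hex : forall n : nat, exists p : X * X,
    eps < d (fst p) (snd p) /\ d (fst p) (snd p) < eps + / (INR n + 1) /\
    eps < d (T (fst p)) (T (snd p))).
  { intro n. apply NNPP; intro Hn. apply Hno.
    exists (/ (INR n + 1)). split.
    { apply Rinv_0_lt_compat; pose proof (pos_INR n); lra. }
    intros x y H1 H2. apply Rnot_lt_le. intro H3. apply Hn.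
    exists (x, y); simpl; auto. }
  set (p := fun n => proj1_sig (constructive_indefinite_description _ (Hex n))).
  assert (Hp : forall n, eps < d (fst (p n)) (snd (p n)) /\
     d (fst (p n)) (snd (p n)) < eps + / (INR n + 1) /\
     eps < d (T (fst (p n))) (T (snd (p n))))
    by (intro n; exact (proj2_sig (constructive_indefinite_description _ (Hex n)))).
  set (tn := fun n => d (fst (p n)) (snd (p n))).
  set (sn := fun n => d (T (fst (p n))) (T (snd (p n)))).
  assert (Hst : forall n, eps < sn n /\ sn n < tn n /\ tn n < eps + / (INR n + 1)).
  { intro n. destruct (Hp n) as [A [B C]]. split; [exact C|]. split; [|exact B].
    apply Hc. intro E. rewrite E in A. assert (d (snd (p n)) (snd (p n)) = 0) by (apply Hdeq; reflexivity).
    lra. }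
  assert (Hphin : forall n, phi (tn n) <= F (tn n) - F (sn n)).
  { intro n. destruct (Hst n) as [A [B C]].
    assert (T (fst (p n)) <> T (snd (p n))).
    { intro E. unfold sn in A. rewrite E in A.
      assert (d (T (snd (p n))) (T (snd (p n))) = 0) by (apply Hdeq; reflexivity). lra. }
    pose proof (HT _ _ H). unfold tn, sn. lra. }
  assert (Hlim : is_lim_seq tn eps).
  { apply is_lim_seq_spec. intros e.
    destruct (small_inv e (cond_pos e)) as [N HN].
    exists N. intros n Hn. specialize (HN n Hn). destruct (Hst n) as [A [B C]].
    rewrite Rabs_pos_eq; lra. }
  assert (Hgt : forall n, eps < tn n) by (intro n; destruct (Hst n) as [A [B C]]; lra).
  pose proof (Hls eps tn Heps Hgt Hlim) as Hpos.
  destruct (HF eps Heps) as [L HL].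
  assert (Hle : forall a, 0 < a -> Rbar_le (LimSup_seq (fun n => phi (tn n))) a).
  { intros a Ha.
    rewrite <- (LimSup_seq_const a).
    apply LimSup_le.
    assert (Ha2 : 0 < a / 2) by lra.
    pose proof (proj1 (filterlim_locally F L) HL (mkposreal _ Ha2)) as Hb.
    destruct Hb as [delta Hdelta].
    destruct (small_inv delta (cond_pos delta)) as [N HN].
    exists N. intros n Hn. specialize (HN n Hn). destruct (Hst n) as [A [B C]].
    assert (H1 : ball L (a/2) (F (tn n))).
    { apply Hdelta; [|lra]. change (Rabs (tn n - eps) < delta). rewrite Rabs_pos_eq; lra. }
    assert (H2 : ball L (a/2) (F (sn n))).
    { apply Hdelta; [|lra]. change (Rabs (sn n - eps) < delta). rewrite Rabs_pos_eq; lra. }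
    change (Rabs (F (tn n) - L) < a/2) in H1.
    change (Rabs (F (sn n) - L) < a/2) in H2.
    apply Rabs_lt_between in H1. apply Rabs_lt_between in H2.
    specialize (Hphin n). simpl. lra. }
  destruct (LimSup_seq (fun n => phi (tn n))) as [l| |] eqn:E.
  - simpl in Hpos. specialize (Hle (l/2)). simpl in Hle.
    assert (l <= l/2) by (apply Hle; lra). lra.
  - specialize (Hle 1 Rlt_0_1). simpl in Hle. exact Hle.
  - simpl in Hpos. exact Hpos.
Qed.
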